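(* Let $\alpha>0$. For each $t>0$, the function $\xi\mapsto\rho_\alpha(\|\xi\|,t)$ is a continuous positive definite function on $K$ (with the inductive limit topology), where $\rho_\alpha(s,t)=e^{-ts^\alpha}$ for $s>1$ and $\rho_\alpha(s,t)=1$ for $0\le s\le1$.
   Context: $k$ is a non-Archimedean local field of characteristic $0$; $k=K_1\subset K_2\subset\cdots$ are finite extensions, $K=\bigcup_nK_n$ with the inductive limit topology of the $K_n$; $m_n=[K_n:k]$, $|\cdot|_n$ the normalized absolute value of $K_n$, and $\|x\|=|x|_n^{1/m_n}$ for $x\in K_n$ (well defined on $K$). A function $\phi:K\to\mathbb C$ is positive definite if $\sum_{i,j}c_i\overline{c_j}\phi(\xi_i-\xi_j)\ge0$ for all finite families $\xi_i\in K$, $c_i\in\mathbb C$. *)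

(* Defs.v *)
From mathcomp Require Import all_boot all_order all_algebra.
From mathcomp Require Import complex.
From mathcomp Require Import boolp reals.
From mathcomp Require Import sequences exp.
Import Order.TTheory GRing.Theory Num.Theory.

Set Implicit Arguments.
Unset Strict Implicit.
Unset Printing Implicit Defensive.

Local Open Scope ring_scope.

Section Defs.
Variable K : fieldType.

Definition is_subfield (F : {pred K}) : Prop :=
  [/\ 0 \in F, 1 \in F,
      (forall x y, x \in F -> y \in F -> x - y \in F),
      (forall x y, x \in F -> y \in F -> x * y \in F) &
      (forall x, x \in F -> x != 0 -> x^-1 \in F)].

Definition is_normalized_dval (F : {pred K}) (v : K -> int) : Prop :=
  [/\ (forall x y, x \in F -> y \in F -> x != 0 -> y != 0 -> v (x * y) = v x + v y),
      (forall x y, x \in F -> y \in F -> x != 0 -> y != 0 -> x + y != 0 ->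
          Num.min (v x) (v y) <= v (x + y)) &
      (forall z : int, exists x, [/\ x \in F, x != 0 & v x = z])].

(* "x is in the valuation ideal of order >= N": x = 0 or v x >= N *)
Definition vge (v : K -> int) (N : int) (x : K) : Prop := x = 0 \/ N <= v x.

(* the residue field O/P of (F, v) has exactly q elements *)
Definition residue_card (F : {pred K}) (v : K -> int) (q : nat) : Prop :=
  exists r : 'I_q -> K,
    [/\ (forall i, r i \in F /\ vge v 0 (r i)),
        (forall i j, i != j -> ~ vge v 1 (r i - r j)) &
        (forall x, x \in F -> vge v 0 x -> exists i, vge v 1 (x - r i))].

Definition complete_wrt (F : {pred K}) (v : K -> int) : Prop :=
  forall u : nat -> K, (forall a, u a \in F) ->
    (forall N : int, exists M, forall a b, (M <= a)%N -> (M <= b)%N -> vge v N (u a - u b)) ->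
    exists2 l, l \in F & forall N : int, exists M, forall a, (M <= a)%N -> vge v N (u a - l).

Definition dim_over (F E : {pred K}) (m : nat) : Prop :=
  exists b : 'I_m -> K, (forall i, b i \in E) /\
    forall x, x \in E -> exists! c : 'I_m -> K,
      (forall i, c i \in F) /\ x = \sum_(i < m) c i * b i.

(* Tower data: Kn 0 = k is a non-Archimedean local field of characteristic 0
   (complete for a normalized discrete valuation v 0 with finite residue field
   of cardinality q 0); k = Kn 0 <= Kn 1 <= ... are finite extensions, Kn n of degree
   m n over k, Kn n carries its normalized discrete valuation v n (compatible with
   v (n-1): a positive multiple of it) with residue field of cardinality q n,
   and K (the whole type) is the union of the Kn n. *)
Definition local_tower (Kn : nat -> {pred K}) (v : nat -> K -> int)
  (q m : nat -> nat) : Prop :=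
  [/\ [pchar K] =i pred0,
      complete_wrt (Kn 0) (v 0),
      (forall n, is_subfield (Kn n) /\ {subset Kn n <= Kn n.+1}),
      (forall n, is_normalized_dval (Kn n) (v n) /\ residue_card (Kn n) (v n) (q n)) &
      [/\ (forall n, dim_over (Kn 0) (Kn n) (m n)),
      (forall n, exists2 e : int, 0 < e &
          forall x, x \in Kn n -> x != 0 -> v n.+1 x = e * v n x) &
      (forall x : K, exists n, x \in Kn n)]].

Variable R : realType.

Definition absn (v : K -> int) (q : nat) (x : K) : R :=
  if x == 0 then 0 else (q%:R : R) ^ (- v x).

Definition normK (Kn : nat -> {pred K}) (v : nat -> K -> int) (q m : nat -> nat)
  (x : K) : R :=
  match pselect (exists n, x \in Kn n) with
  | left H => let n := @ex_minn (fun n => x \in Kn n) H in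
              absn (v n) (q n) x `^ ((m n)%:R)^-1
  | right _ => 0
  end.

Definition rho (alpha s t : R) : R :=
  if 1 < s then expR (- (t * s `^ alpha)) else 1.

(* U is open in the inductive limit topology: U \cap K_n open in K_n for all n,
   K_n carrying its valuation topology *)
Definition open_ind (Kn : nat -> {pred K}) (v : nat -> K -> int) (U : K -> Prop) : Prop :=
  forall n x, x \in Kn n -> U x ->
    exists N : int, forall y, y \in Kn n -> vge (v n) N (y - x) -> U y.

Local Open Scope complex_scope.

Definition openC (V : R[i] -> Prop) : Prop :=
  forall z, V z -> exists2 e : R[i], 0 < e & forall w, `|w - z| < e -> V w.

Definition continuous_ind (Kn : nat -> {pred K}) (v : nat -> K -> int)
  (phi : K -> R[i]) : Prop :=
  forall V, openC V -> open_ind Kn v (fun x => V (phi x)).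

Definition positive_definite (phi : K -> R[i]) : Prop :=
  forall (N : nat) (xi : 'I_N -> K) (c : 'I_N -> R[i]),
    0 <= \sum_(i < N) \sum_(j < N) c i * (c j)^* * phi (xi i - xi j).

End Defs.

(* Main.v *)
Require Import Defs.

From mathcomp Require Import all_boot all_order all_algebra.
From mathcomp Require Import complex.
From mathcomp Require Import boolp reals.
From mathcomp Require Import sequences exp.
From mathcomp Require Import zify ring lra.
Import Order.TTheory GRing.Theory Num.Theory.
Set Implicit Arguments. Unset Strict Implicit. Unset Printing Implicit Defensive.
Local Open Scope ring_scope.

Section SubF.
Variable K : fieldType.
Variable F : {pred K}.
Hypothesis hF : is_subfield F.

Lemma sf0 : 0 \in F. Proof. by case: hF. Qed.
Lemma sf1 : 1 \in F. Proof. by case: hF. Qed.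
Lemma sfB x y : x \in F -> y \in F -> x - y \in F. Proof. by case: hF => _ _ H _ _; apply: H. Qed.
Lemma sfM x y : x \in F -> y \in F -> x * y \in F. Proof. by case: hF => _ _ _ H _; apply: H. Qed.
Lemma sfV x : x \in F -> x^-1 \in F.
Proof. case: hF => _ _ _ _ H xF; have [->|nz] := eqVneq x 0; first by rewrite invr0 sf0. by apply: H. Qed.
Lemma sfN x : x \in F -> - x \in F. Proof. by move=> xF; rewrite -sub0r sfB // sf0. Qed.
Lemma sfD x y : x \in F -> y \in F -> x + y \in F.
Proof. by move=> xF yF; rewrite -[y]opprK sfB // sfN. Qed.
Lemma sfX x n : x \in F -> x ^+ n \in F.
Proof. by move=> xF; elim: n => [|n IH]; rewrite ?expr0 ?sf1 // exprS sfM. Qed.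
Lemma sfdiv x y : x \in F -> y \in F -> x / y \in F. Proof. by move=> *; rewrite sfM ?sfV. Qed.
Lemma sfsum (I : Type) (r : seq I) (P : pred I) (f : I -> K) :
  (forall i, P i -> f i \in F) -> \sum_(i <- r | P i) f i \in F.
Proof. by move=> H; apply: (big_ind (fun x => x \in F)) => //; [exact: sf0 | exact: sfD]. Qed.
Lemma sfn n : n%:R \in F.
Proof. by elim: n => [|n IH]; rewrite ?sf0 // -addn1 natrD sfD // sf1. Qed.
End SubF.

Section Val.
Variable K : fieldType.
Variable F : {pred K}.
Variable v : K -> int.
Hypothesis hF : is_subfield F.
Hypothesis hv : is_normalized_dval F v.

Lemma vM x y : x \in F -> y \in F -> x != 0 -> y != 0 -> v (x * y) = v x + v y.
Proof. by case: hv => H _ _; apply: H. Qed.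
Lemma vD x y : x \in F -> y \in F -> x != 0 -> y != 0 -> x + y != 0 ->
  Num.min (v x) (v y) <= v (x + y).
Proof. by case: hv => _ H _; apply: H. Qed.
Lemma vsurj z : exists x, [/\ x \in F, x != 0 & v x = z].
Proof. by case: hv => _ _ H; apply: H. Qed.

Lemma v1 : v 1 = 0.
Proof.
have := vM (sf1 hF) (sf1 hF) (oner_neq0 _) (oner_neq0 _); rewrite mulr1 => H.
by apply/eqP; rewrite -(inj_eq (addrI (v 1))) addr0 -H.
Qed.
Lemma vN1 : v (-1) = 0.
Proof.
have F1 : -1 \in F by rewrite sfN ?sf1.
have n1 : (-1 : K) != 0 by rewrite oppr_eq0 oner_neq0.
have := vM F1 F1 n1 n1; rewrite mulrNN mulr1 v1; lia.
Qed.
Lemma vN x : x \in F -> v (- x) = v x.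
Proof.
move=> xF; have [->|nz] := eqVneq x 0; first by rewrite oppr0.
by rewrite -mulN1r vM ?vN1 ?add0r ?sfN ?sf1 // oppr_eq0 oner_neq0.
Qed.
Lemma vV x : x \in F -> x != 0 -> v (x^-1) = - v x.
Proof.
move=> xF nz; have := vM (sfV hF xF) xF (invr_neq0 nz) nz.
by rewrite mulVf // v1 => /eqP; rewrite eq_sym addr_eq0 => /eqP.
Qed.
Lemma vX x n : x \in F -> x != 0 -> v (x ^+ n) = v x *+ n.
Proof.
move=> xF nz; elim: n => [|n IH]; first by rewrite expr0 v1.
by rewrite exprS vM ?sfX ?expf_neq0 // IH mulrS.
Qed.

Lemma vge0 N : vge v N 0. Proof. by left. Qed.
Lemma vge_self x : vge v (v x) x. Proof. by right. Qed.
Lemma vge_le M N x : M <= N -> vge v N x -> vge v M x.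
Proof. by move=> le [->|h]; [left | right; apply: le_trans h]. Qed.
Lemma vgeD N x y : x \in F -> y \in F -> vge v N x -> vge v N y -> vge v N (x + y).
Proof.
move=> xF yF [->|hx]; first by rewrite add0r. move=> [->|hy]; first by rewrite addr0; right.
have [z0|nz] := eqVneq (x + y) 0; first by left.
have [x0|nx] := eqVneq x 0; first by rewrite x0 add0r; right.
have [y0|ny] := eqVneq y 0; first by rewrite y0 addr0; right.
right; apply: le_trans (vD xF yF nx ny nz); by rewrite le_min hx hy.
Qed.
Lemma vgeN N x : x \in F -> vge v N x -> vge v N (- x).
Proof. by move=> xF [->|h]; [left; rewrite oppr0 | right; rewrite vN]. Qed.
Lemma vgeB N x y : x \in F -> y \in F -> vge v N x -> vge v N y -> vge v N (x - y).
Proof. by move=> xF yF hx hy; apply: vgeD; rewrite ?sfN //; apply: vgeN. Qed.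
Lemma vgeBC N x y : x \in F -> y \in F -> vge v N (x - y) -> vge v N (y - x).
Proof. by move=> xF yF h; rewrite -opprB; apply: vgeN => //; rewrite sfB. Qed.
Lemma vgeM N M x y : x \in F -> y \in F -> vge v N x -> vge v M y -> vge v (N + M) (x * y).
Proof.
move=> xF yF [->|hx]; first by rewrite mul0r; left. move=> [->|hy]; first by rewrite mulr0; left.
have [x0|nx] := eqVneq x 0; first by rewrite x0 mul0r; left.
have [y0|ny] := eqVneq y 0; first by rewrite y0 mulr0; left.
by right; rewrite vM // lerD.
Qed.
Lemma vge_sum (I : Type) (r : seq I) (P : pred I) (f : I -> K) N :
  (forall i, P i -> f i \in F /\ vge v N (f i)) -> vge v N (\sum_(i <- r | P i) f i).
Proof.
move=> H; have : (\sum_(i <- r | P i) f i \in F) /\ vge v N (\sum_(i <- r | P i) f i).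
  apply: (big_ind (fun x => x \in F /\ vge v N x)) => //.
    by split; [exact: sf0 | left].
  by move=> x y [xF hx] [yF hy]; split; [exact: sfD | exact: vgeD].
by case.
Qed.
Lemma vge_all x : (forall n : nat, vge v n%:Z x) -> x = 0.
Proof.
move=> H; case: (H `|v x|.+1) => // h; exfalso.
move: h; have := lez_abs (v x); lia.
Qed.
Lemma vge_strict x y : x \in F -> y \in F -> x != 0 -> vge v (v x + 1) (y - x) -> v y = v x.
Proof.
move=> xF yF nx h.
have hy : vge v (v x) y.
  by rewrite -[y](subrK x); apply: vgeD; rewrite ?sfB //; [apply: vge_le h; rewrite lerDl | right].
have ny : y != 0.
  apply/negP => /eqP y0; move: h; rewrite y0 sub0r => -[/eqP|]; first by rewrite oppr_eq0 (negPf nx).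
  rewrite vN //; lia.
case: hy => [/eqP|hy]; first by rewrite (negPf ny).
have [lt|ge] := ltP (v x) (v y); last by apply/eqP; rewrite eq_le ge hy.
have : vge v (v x + 1) x.
  have e : x = y - (y - x) by rewrite opprB addrC subrK.
  rewrite [X in vge _ _ X]e.
  by apply: vgeB; rewrite ?sfB //; right; rewrite lezD1.
case => [/eqP|]; first by rewrite (negPf nx). by rewrite lezD1 ltxx.
Qed.
Lemma vge_mulKV N c x : c \in F -> x \in F -> c != 0 -> vge v (N + v c) (c * x) -> vge v N x.
Proof.
move=> cF xF nc h; have := vgeM (sfV hF cF) (sfM hF cF xF) (vge_self (c^-1)) h.
rewrite mulKf // vV //; congr vge; lia.
Qed.
End Val.

From mathcomp Require Import all_boot all_order all_algebra.
From mathcomp Require Import boolp.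
From mathcomp Require Import zify ring.
Import Order.TTheory GRing.Theory Num.Theory.
Set Implicit Arguments. Unset Strict Implicit. Unset Printing Implicit Defensive.
Local Open Scope ring_scope.

Section FI.
Variables (K : fieldType) (k L : {pred K}) (v0 w : K -> int) (q Q m E : nat).
Hypotheses (hk : is_subfield k) (hL : is_subfield L) (hv0 : is_normalized_dval k v0)
  (hw : is_normalized_dval L w) (hkL : {subset k <= L}) (E0 : (0 < E)%N)
  (hE : forall x, x \in k -> x != 0 -> w x = E%:Z * v0 x) (cpl : complete_wrt k v0).
Variables (pi0 pi : K) (rk : 'I_q -> K) (rL : 'I_Q -> K) (b : 'I_m -> K).
Hypotheses (pi0k : pi0 \in k) (pi0nz : pi0 != 0) (v0pi0 : v0 pi0 = 1)
  (piL : pi \in L) (pinz : pi != 0) (wpi : w pi = 1).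
Hypotheses (rk1 : forall i, rk i \in k /\ vge v0 0 (rk i))
  (rk2 : forall i j, i != j -> ~ vge v0 1 (rk i - rk j))
  (rk3 : forall x, x \in k -> vge v0 0 x -> exists i, vge v0 1 (x - rk i)).
Hypotheses (rL1 : forall i, rL i \in L /\ vge w 0 (rL i))
  (rL2 : forall i j, i != j -> ~ vge w 1 (rL i - rL j))
  (rL3 : forall x, x \in L -> vge w 0 x -> exists i, vge w 1 (x - rL i)).
Hypotheses (b1 : forall i, b i \in L)
  (b2 : forall x, x \in L -> exists! c : 'I_m -> K, (forall i, c i \in k) /\ x = \sum_(i < m) c i * b i).

Lemma LD x y : x \in L -> y \in L -> x + y \in L. Proof. exact: sfD. Qed.
Lemma LB x y : x \in L -> y \in L -> x - y \in L. Proof. exact: sfB. Qed.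
Lemma LM x y : x \in L -> y \in L -> x * y \in L. Proof. exact: sfM. Qed.
Lemma kD x y : x \in k -> y \in k -> x + y \in k. Proof. exact: sfD. Qed.
Lemma kB x y : x \in k -> y \in k -> x - y \in k. Proof. exact: sfB. Qed.
Lemma kM x y : x \in k -> y \in k -> x * y \in k. Proof. exact: sfM. Qed.

Lemma wgeD N x y : x \in L -> y \in L -> vge w N x -> vge w N y -> vge w N (x + y).
Proof. by move=> ? ?; apply: (vgeD hw). Qed.
Lemma wgeB N x y : x \in L -> y \in L -> vge w N x -> vge w N y -> vge w N (x - y).
Proof. by move=> ? ?; apply: (vgeB hL hw). Qed.
Lemma wgeM N M x y : x \in L -> y \in L -> vge w N x -> vge w M y -> vge w (N + M) (x * y).
Proof. by move=> ? ?; apply: (vgeM hw). Qed.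
Lemma v0geD N x y : x \in k -> y \in k -> vge v0 N x -> vge v0 N y -> vge v0 N (x + y).
Proof. by move=> ? ?; apply: (vgeD hv0). Qed.
Lemma v0geB N x y : x \in k -> y \in k -> vge v0 N x -> vge v0 N y -> vge v0 N (x - y).
Proof. by move=> ? ?; apply: (vgeB hk hv0). Qed.
Lemma v0geM N M x y : x \in k -> y \in k -> vge v0 N x -> vge v0 M y -> vge v0 (N + M) (x * y).
Proof. by move=> ? ?; apply: (vgeM hv0). Qed.

Lemma wk N x : x \in k -> vge v0 N x -> vge w (E%:Z * N) x.
Proof.
move=> xk [->|h]; first by left.
have [->|nz] := eqVneq x 0; first by left.
by right; rewrite hE // ler_pM2l // ltz_nat.
Qed.

Lemma wpi0 : w pi0 = E. Proof. by rewrite hE // v0pi0 mulr1. Qed.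
Lemma pi0L : pi0 \in L. Proof. exact: hkL. Qed.

Definition OL x := x \in L /\ vge w 0 x.

Lemma OLsum (I : finType) (P : pred I) (f : I -> K) :
  (forall i, P i -> OL (f i)) -> OL (\sum_(i | P i) f i).
Proof.
move=> H; split; first by apply: (sfsum hL) => i /H [].
by apply: (vge_sum hL hw) => i /H.
Qed.

Lemma OLM x y : OL x -> OL y -> OL (x * y).
Proof. move=> [xL hx] [yL hy]; split; first exact: sfM. by have := wgeM xL yL hx hy; rewrite addr0. Qed.

Lemma OLX x n : OL x -> OL (x ^+ n).
Proof. move=> hx; elim: n => [|n IH]; last by by rewrite exprS; apply: OLM. by split; [exact: sf1|right; rewrite (v1 hL hw)]. Qed.

Lemma OLpi : OL pi. Proof. by split => //; right; rewrite wpi. Qed.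

Lemma digit_indep j (d : 'I_j -> K) :
  (forall t, d t \in L /\ vge w 0 (d t) /\ (vge w 1 (d t) -> d t = 0)) ->
  vge w j%:Z (\sum_(t < j) d t * pi ^+ t) -> forall t, d t = 0.
Proof.
elim: j d => [|j IH] d H hs t; first by case: t.
set T := \sum_(t < j) d (lift ord0 t) * pi ^+ t.
have TL : OL T by apply: OLsum => i _; apply: OLM; [case: (H (lift ord0 i)) => ? [] | apply: OLX; apply: OLpi].
have eS : \sum_(t < j.+1) d t * pi ^+ t = d ord0 + pi * T.
  rewrite big_ord_recl expr0 mulr1 /T mulr_sumr; congr (_ + _); apply: eq_bigr => i _.
  by rewrite /= /bump /= add1n exprS mulrCA.
have [d0L [d0ge d0z]] := H ord0.
have d00 : d ord0 = 0.
  apply: d0z; have -> : d ord0 = (d ord0 + pi * T) - pi * T by rewrite addrK.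
  apply: wgeB; rewrite ?sfD ?sfM //; try by case: TL.
    by move: hs; rewrite eS; apply: vge_le; rewrite lez_nat.
  by have := wgeM piL TL.1 (vge_self _ _) TL.2; rewrite wpi addr0.
rewrite eS d00 add0r in hs.
have hT : vge w j%:Z T.
  apply: (vge_mulKV hL hw piL TL.1 pinz); rewrite wpi; congr vge: hs; lia.
have := IH (fun t => d (lift ord0 t)) (fun t => H (lift ord0 t)) hT.
by case: (unliftP ord0 t) => [t'|] -> //; apply.
Qed.

Lemma digit_cover j x : x \in L -> vge w 0 x ->
  exists d : 'I_j -> 'I_Q, vge w j%:Z (x - \sum_(t < j) rL (d t) * pi ^+ t).
Proof.
elim: j x => [|j IH] x xL hx.
  have [i _] := rL3 xL hx; exists (fun _ => i); by rewrite big_ord0 subr0.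
have [i0 hi0] := rL3 xL hx.
have i0L := (rL1 i0).1.
set x' := (x - rL i0) / pi.
have ex : x - rL i0 = pi * x' by rewrite /x' mulrC divfK.
have x'L : x' \in L by rewrite /x' sfdiv // sfB.
have hx' : vge w 0 x'.
  by apply: (vge_mulKV hL hw piL x'L pinz); rewrite wpi add0r -ex.
have [d' hd'] := IH x' x'L hx'.
exists (fun t => match unlift ord0 t with Some t' => d' t' | None => i0 end).
rewrite big_ord_recl /= unlift_none expr0 mulr1.
have -> : \sum_(i < j) rL match unlift ord0 (lift ord0 i) with Some t' => d' t' | None => i0 end * pi ^+ (bump 0 i)
   = pi * \sum_(t < j) rL (d' t) * pi ^+ t.
  rewrite mulr_sumr; apply: eq_bigr => i _; rewrite liftK /bump /= add1n exprS; ring.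
have -> : x - (rL i0 + pi * \sum_(t < j) rL (d' t) * pi ^+ t) = pi * (x' - \sum_(t < j) rL (d' t) * pi ^+ t).
  by rewrite mulrBr -ex; ring.
have sL : \sum_(t < j) rL (d' t) * pi ^+ t \in L.
  by apply: (sfsum hL) => t _; rewrite sfM // ?sfX //; case: (rL1 (d' t)).
have := wgeM piL (sfB hL x'L sL) (vge_self _ _) hd'; rewrite wpi; congr vge; lia.
Qed.

Definition Rel x y := vge w E%:Z (x - y).

Lemma RelB x y z : OL x -> OL y -> OL z -> Rel x z -> Rel y z -> Rel x y.
Proof.
move=> [xL _] [yL _] [zL _] h1 h2; rewrite /Rel.
have -> : x - y = (x - z) - (y - z) by ring.
by apply: wgeB; rewrite ?sfB.
Qed.

Definition sigma (d : {ffun 'I_E -> 'I_Q}) := \sum_(t < E) rL (d t) * pi ^+ t.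

Lemma OLsigma d : OL (sigma d).
Proof. by apply: OLsum => t _; apply: OLM; [exact: rL1 | apply: OLX; exact: OLpi]. Qed.

Lemma sigma_inj d d' : Rel (sigma d) (sigma d') -> d = d'.
Proof.
move=> h.
have key : forall t, rL (d t) - rL (d' t) = 0.
  apply: (@digit_indep E (fun t => rL (d t) - rL (d' t))).
    move=> t; have [aL ag] := rL1 (d t); have [bL bg] := rL1 (d' t).
    split; first by rewrite sfB. split; first by apply: wgeB.
    move=> h1; have [e|ne] := eqVneq (d t) (d' t); first by rewrite e subrr.
    by case: (rL2 ne h1).
  move: h; rewrite /Rel /sigma -sumrB; congr vge; apply: eq_bigr => t _; ring.
apply/ffunP => t; have [e|ne] := eqVneq (d t) (d' t) => //.
case: (rL2 ne); rewrite key; exact: vge0.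
Qed.

Lemma sigma_cover x : OL x -> exists d, Rel x (sigma d).
Proof.
move=> [xL hx]; have [dd hd] := digit_cover E xL hx.
exists [ffun t => dd t]; rewrite /Rel /sigma; congr vge: hd; congr (_ - _).
by apply: eq_bigr => t _; rewrite ffunE.
Qed.

Definition Ind N (y : 'I_N -> K) := (forall i, OL (y i)) /\
  forall c : 'I_N -> K, (forall i, c i \in k /\ vge v0 0 (c i)) ->
    vge w E%:Z (\sum_i c i * y i) -> forall i, vge v0 1 (c i).

Definition tau N (y : 'I_N -> K) (a : {ffun 'I_N -> 'I_q}) := \sum_i rk (a i) * y i.

Lemma OLk c : c \in k -> vge v0 0 c -> OL c.
Proof. by move=> ck h; split; [exact: hkL | have := wk ck h; rewrite mulr0]. Qed.

Lemma OLtau N (y : 'I_N -> K) a : (forall i, OL (y i)) -> OL (tau y a).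
Proof. by move=> hy; apply: OLsum => i _; apply: OLM => //; apply: OLk; case: (rk1 (a i)). Qed.

Lemma tau_inj N (y : 'I_N -> K) a a' : Ind y -> Rel (tau y a) (tau y a') -> a = a'.
Proof.
move=> [hy hi] h.
have key := hi (fun i => rk (a i) - rk (a' i)).
have : forall i, vge v0 1 (rk (a i) - rk (a' i)).
  apply: key.
    move=> i; have [aL ag] := rk1 (a i); have [bL bg] := rk1 (a' i).
    by split; [rewrite sfB | apply: v0geB].
  move: h; rewrite /Rel /tau -sumrB; congr vge; apply: eq_bigr => t _; ring.
move=> H; apply/ffunP => t; have [e|ne] := eqVneq (a t) (a' t) => //.
by case: (rk2 ne (H t)).
Qed.

Lemma card_le (A B : finType) (f : A -> K) (g : B -> K) :
  (forall a, OL (f a)) -> (forall b, OL (g b)) ->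
  (forall a, exists b, Rel (f a) (g b)) -> (forall a a', Rel (f a) (f a') -> a = a') ->
  (#|A| <= #|B|)%N.
Proof.
move=> hf hg cov inj; have [h hh] := choice cov.
apply: (@leq_card _ _ h) => a a' e; apply: inj.
by apply: (RelB _ _ (hg (h a))) => //; rewrite e.
Qed.

Lemma q2 : (1 < q)%N.
Proof.
have [i0 h0] := rk3 (sf0 hk) (vge0 _ 0).
have h1' : vge v0 0 1 by right; rewrite (v1 hk hv0).
have [i1 h1] := rk3 (sf1 hk) h1'.
rewrite ltnNge; apply/negP => hq.
have e : i0 = i1 by apply: ord_inj; have := ltn_ord i0; have := ltn_ord i1; lia.
have rkk := (rk1 i1).1.
have : vge v0 1 ((1 - rk i1) - (0 - rk i1)) by apply: v0geB; rewrite ?sfB ?sf1 ?sf0 // -e.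
have -> : (1 - rk i1) - (0 - rk i1) = 1 by ring.
case => [/eqP|]; first by rewrite oner_eq0.
by rewrite (v1 hk hv0).
Qed.

Lemma Ind_bound N (y : 'I_N -> K) : Ind y -> (q ^ N <= Q ^ E)%N.
Proof.
move=> hy; have := @card_le {ffun 'I_N -> 'I_q} {ffun 'I_E -> 'I_Q} (tau y) sigma.
rewrite !card_ffun !card_ord; apply.
- by move=> a; apply: OLtau; case: hy.
- exact: OLsigma.
- by move=> a; apply: sigma_cover; apply: OLtau; case: hy.
- by move=> a a'; apply: tau_inj.
Qed.

Definition ext N (y : 'I_N -> K) z : 'I_N.+1 -> K :=
  fun t => if unlift ord0 t is Some i then y i else z.

Lemma sum_ext N (y : 'I_N -> K) z (c : 'I_N.+1 -> K) :
  \sum_(t < N.+1) c t * ext y z t = c ord0 * z + \sum_(i < N) c (lift ord0 i) * y i.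
Proof. by rewrite big_ord_recl /ext unlift_none; congr (_ + _); apply: eq_bigr => i _; rewrite liftK. Qed.

Lemma exists_max : exists N (y : 'I_N -> K), Ind y /\ forall z, OL z -> ~ Ind (ext y z).
Proof.
pose P n := `[< exists y : 'I_n -> K, Ind y >].
have P0 : exists n, P n.
  exists 0%N; apply/asboolP; exists (fun _ => 0); split; [by move=> i; have := ltn_ord i | by move=> c _ _ i; have := ltn_ord i].
have Pb : forall n, P n -> (n <= Q ^ E)%N.
  move=> n /asboolP [y hy]; apply: ltnW; apply: leq_trans (Ind_bound hy).
  exact: ltn_expl q2.
case: (ex_maxnP P0 Pb) => N /asboolP [y hy] hmax.
exists N, y; split => // z hz hI.
have : P N.+1 by apply/asboolP; exists (ext y z).
by move/hmax; rewrite ltnn.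
Qed.

Lemma max_cover N (y : 'I_N -> K) : Ind y -> (forall z, OL z -> ~ Ind (ext y z)) ->
  forall x, OL x -> exists a, Rel x (tau y a).
Proof.
move=> hy hmax x hx.
case: (pselect (exists a, Rel x (tau y a))) => // nex; exfalso.
have [yO yI] := hy.
apply: (hmax x hx); split.
  by move=> t; rewrite /ext; case: (unlift ord0 t).
move=> c hc; rewrite sum_ext => hS.
have [c0k c0g] := hc ord0.
have hc0 : vge v0 1 (c ord0).
  case: (pselect (vge v0 1 (c ord0))) => // nc0; exfalso; apply: nex.
  have nz : c ord0 != 0 by apply/negP => /eqP e; apply: nc0; left.
  have vc0 : v0 (c ord0) = 0.
    case: c0g => [/eqP|h0]; first by rewrite (negPf nz).
    apply/eqP; rewrite eq_le h0 andbT; rewrite leNgt; apply/negP => h1; apply: nc0; right.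
    by rewrite -lezD1 add0r in h1.
  set e := fun i => - c (lift ord0 i) / c ord0.
  have ek : forall i, e i \in k.
    by move=> i; rewrite /e sfdiv ?sfN //; case: (hc (lift ord0 i)).
  have eg : forall i, vge v0 0 (e i).
    move=> i; have [ck cg] := hc (lift ord0 i).
    have := v0geM (sfN hk ck) (sfV hk c0k) (vgeN hk hv0 ck cg) (vge_self _ (c ord0)^-1).
    by rewrite (vV hk hv0) // vc0 oppr0 addr0.
  have [af haf] := choice (fun i => rk3 (ek i) (eg i)).
  exists [ffun i => af i]; rewrite /Rel /tau.
  set U := \sum_(i < N) c (lift ord0 i) * y i.
  set T := \sum_i rk ([ffun i => af i] i) * y i.
  have eq1 : \sum_(i < N) (e i - rk (af i)) * y i = - (U / c ord0) - T.
    rewrite /T /U mulr_suml -sumrN -sumrB; apply: eq_bigr => i _; rewrite ffunE /e; field; done.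
  have -> : x - T = (c ord0)^-1 * (c ord0 * x + U) + \sum_(i < N) (e i - rk (af i)) * y i.
    by rewrite eq1; field.
  have c0L : (c ord0)^-1 \in L by apply: hkL; exact: (sfV hk c0k).
  have sUL : U \in L.
    by apply: (sfsum hL) => i _; apply: LM; [apply: hkL; case: (hc (lift ord0 i)) | case: (yO i)].
  have UL : c ord0 * x + U \in L by apply: LD => //; apply: LM; [apply: hkL | case: hx].
  have sL : \sum_(i < N) (e i - rk (af i)) * y i \in L.
    by apply: (sfsum hL) => i _; apply: LM; [apply: hkL; apply: kB => //; case: (rk1 (af i)) | case: (yO i)].
  apply: wgeD => //; first by apply: LM.
    have := wgeM c0L UL (wk (sfV hk c0k) (vge_self _ _)) hS.
    by rewrite (vV hk hv0) // vc0 oppr0 mulr0 add0r.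
  apply: (vge_sum hL hw) => i _.
  have [rkk _] := rk1 (af i); have [yL yg] := yO i.
  split; first by apply: LM => //; apply: hkL; apply: kB.
  have := wgeM (hkL (kB (ek i) rkk)) yL (wk (kB (ek i) rkk) (haf i)) yg.
  by rewrite mulr1 addr0.
have hU : forall i, vge v0 1 (c (lift ord0 i)).
  apply: yI; first by move=> i; apply: hc.
  have -> : \sum_(i < N) c (lift ord0 i) * y i = (c ord0 * x + \sum_(i < N) c (lift ord0 i) * y i) - c ord0 * x.
    by ring.
  have [xL xg] := hx.
  have sUL : \sum_(i < N) c (lift ord0 i) * y i \in L.
    by apply: (sfsum hL) => i _; apply: LM; [apply: hkL; case: (hc (lift ord0 i)) | case: (yO i)].
  apply: wgeB => //; [by apply: LD => //; apply: LM => //; apply: hkL | by apply: LM => //; apply: hkL |].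
  by have := wgeM (hkL c0k) xL (wk c0k hc0) xg; rewrite mulr1 addr0.
by move=> t; case: (unliftP ord0 t) => [t'|] ->.
Qed.

Lemma ind_free0 N (y : 'I_N -> K) : Ind y -> forall c : 'I_N -> K,
  (forall i, c i \in k /\ vge v0 0 (c i)) -> \sum_i c i * y i = 0 -> forall i, c i = 0.
Proof.
move=> [yO yI] c hc hs i; apply: (vge_all (v := v0)) => t; move: t c hc hs i.
elim=> [|t IH] c hc hs i; first by case: (hc i).
have h1 : forall i, vge v0 1 (c i) by apply: yI => //; rewrite hs; left.
set c' := fun i => c i / pi0.
have c'k : forall i, c' i \in k by move=> j; apply: sfdiv => //; case: (hc j).
have ec : forall j, c j = pi0 * c' j by move=> j; rewrite /c' mulrC divfK.
have hc' : forall j, c' j \in k /\ vge v0 0 (c' j).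
  move=> j; split => //; apply: (vge_mulKV hk hv0 pi0k (c'k j) pi0nz).
  by rewrite v0pi0 add0r -ec.
have hs' : \sum_i c' i * y i = 0.
  have -> : \sum_i c' i * y i = pi0^-1 * \sum_i c i * y i.
    by rewrite mulr_sumr; apply: eq_bigr => j _; rewrite /c'; ring.
  by rewrite hs mulr0.
have := IH c' hc' hs' i.
rewrite ec => h; have := v0geM pi0k (c'k i) (vge_self _ _) h.
by rewrite v0pi0; congr vge; lia.
Qed.

Lemma ind_free N (y : 'I_N -> K) : Ind y -> forall c : 'I_N -> K,
  (forall i, c i \in k) -> \sum_i c i * y i = 0 -> forall i, c i = 0.
Proof.
move=> hy c hc hs.
set s := (\max_(i < N) `|v0 (c i)|)%N.
have hps : pi0 ^+ s != 0 by rewrite expf_neq0.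
have hc'' : forall j, pi0 ^+ s * c j \in k /\ vge v0 0 (pi0 ^+ s * c j).
  move=> j; split; first by rewrite sfM ?sfX.
  have [->|nz] := eqVneq (c j) 0; first by rewrite mulr0; left.
  right; rewrite (vM hv0) ?sfX ?(vX hk hv0) // v0pi0.
  have : (`|v0 (c j)| <= s)%N by exact: (@leq_bigmax _ (fun j => `|v0 (c j)|%N) j).
  rewrite natz; have := lez_abs (v0 (c j)); lia.
have hs'' : \sum_i (pi0 ^+ s * c i) * y i = 0.
  have -> : \sum_i (pi0 ^+ s * c i) * y i = pi0 ^+ s * \sum_i c i * y i.
    by rewrite mulr_sumr; apply: eq_bigr => j _; ring.
  by rewrite hs mulr0.
move=> i; have := ind_free0 hy hc'' hs'' i.
by move/eqP; rewrite mulf_eq0 (negPf hps) /= => /eqP.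
Qed.

Section Span.
Variables (N : nat) (y : 'I_N -> K).
Hypotheses (hy : Ind y) (cov : forall x, OL x -> exists a, Rel x (tau y a)).

Lemma step_ex x : exists p : {ffun 'I_N -> 'I_q} * K, OL x -> OL p.2 /\ x = tau y p.1 + pi0 * p.2.
Proof.
case: (pselect (OL x)) => hx; last first.
  by exists ([ffun => Ordinal (ltnW q2)], 0) => /hx.
have [a ha] := cov hx.
have tO : OL (tau y a) by apply: OLtau; case: hy.
exists (a, (x - tau y a) / pi0) => _ /=.
have xL : x - tau y a \in L by apply: LB; [case: hx | case: tO].
have eL : (x - tau y a) / pi0 \in L by apply: sfdiv => //; exact: pi0L.
split; last by rewrite mulrC divfK // addrC subrK.
split => //; apply: (vge_mulKV hL hw pi0L eL pi0nz).
by rewrite wpi0 add0r mulrC divfK.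
Qed.

Lemma span_OL x : OL x -> exists A : 'I_N -> K, (forall i, A i \in k) /\ x = \sum_i A i * y i.
Proof.
move=> hx.
have [st hst] := choice step_ex.
pose X n := iter n (fun z => (st z).2) x.
have OLXn : forall n, OL (X n) by elim=> [|n IH] //; exact: (hst _ IH).1.
pose S n i := \sum_(0 <= t < n) pi0 ^+ t * rk ((st (X t)).1 i).
have Sk : forall n i, S n i \in k.
  by move=> n i; apply: (sfsum hk) => t _; apply: kM; [apply: sfX | case: (rk1 ((st (X t)).1 i))].
have ident : forall n, x = \sum_i S n i * y i + pi0 ^+ n * X n.
  elim=> [|n IH]; first by rewrite /S /= (eq_bigr (fun _ => 0)) ?big1 ?add0r ?expr0 ?mul1r // => i _; rewrite big_geq // mul0r.
  rewrite {1}IH {1}(hst _ (OLXn n)).2 /tau.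
  have -> : \sum_i S n.+1 i * y i = \sum_i S n i * y i + pi0 ^+ n * \sum_i rk ((st (X n)).1 i) * y i.
    rewrite mulr_sumr -big_split; apply: eq_bigr => i _; rewrite /S /= big_nat_recr //=; ring.
  rewrite exprSr /X /=; ring.
have tail : forall a c i, (a <= c)%N -> vge v0 a%:Z (S c i - S a i).
  move=> a c i hab; rewrite /S /= (big_cat_nat (leq0n a) hab) /= addrC addrK big_nat_cond.
  apply: (vge_sum hk hv0) => t /andP [/andP [ha _] _].
  have [rkk rkg] := rk1 ((st (X t)).1 i).
  split; first by apply: kM => //; apply: sfX.
  have := v0geM (sfX hk t pi0k) rkk (vge_self _ _) rkg.
  rewrite (vX hk hv0) // v0pi0 addr0 => h; apply: vge_le h; rewrite -natz; lia.
have lim : forall i, exists l, l \in k /\ forall Nz : int, exists M, forall a, (M <= a)%N -> vge v0 Nz (S a i - l).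
  move=> i.
  have cau : forall Nz : int, exists M, forall a c, (M <= a)%N -> (M <= c)%N -> vge v0 Nz (S a i - S c i).
    move=> Nz; exists `|Nz|%N => a c ha hb.
    have hN : forall c, (`|Nz| <= c)%N -> Nz <= c%:Z.
      by move=> c' hc; have := lez_abs Nz; move: hc; rewrite -(lez_nat); lia.
    have [hab|hba] := leqP a c.
      have := tail a c i hab; move/(vgeBC hk hv0 (Sk c i) (Sk a i)) => h; apply: vge_le h; exact: hN.
    have := tail c a i (ltnW hba) => h; apply: vge_le h; exact: hN.
  have [l lk hl] := cpl (fun a => Sk a i) cau.
  by exists l.
have [A hA] := choice lim.
exists A; split; first by move=> i; case: (hA i).
apply/eqP; rewrite -subr_eq0; apply/eqP.
have zL : x - \sum_i A i * y i \in L.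
  apply: LB; first by case: hx.
  by apply: (sfsum hL) => i _; apply: LM; [apply: hkL; case: (hA i) | case: (hy.1 i)].
apply: (vge_all (v := w)) => n.
have [Mf hMf] := choice (fun i => (hA i).2 n%:Z).
set K0 := (n + \max_(i < N) Mf i)%N.
have -> : x - \sum_i A i * y i = pi0 ^+ K0 * X K0 + \sum_i (S K0 i - A i) * y i.
  have -> : \sum_i (S K0 i - A i) * y i = \sum_i S K0 i * y i - \sum_i A i * y i.
    by rewrite -sumrB; apply: eq_bigr => i _; ring.
  rewrite {1}(ident K0); ring.
have [XL Xg] := OLXn K0.
apply: wgeD.
- by apply: LM => //; apply: hkL; apply: sfX.
- by apply: (sfsum hL) => i _; apply: LM; [apply: hkL; apply: kB => //; case: (hA i) | case: (hy.1 i)].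
- have := wgeM (hkL (sfX hk K0 pi0k)) XL (wk (sfX hk K0 pi0k) (vge_self _ _)) Xg.
  rewrite (vX hk hv0) // v0pi0 addr0 => h; apply: vge_le h.
  rewrite /K0; have : (1 <= E)%N by []; rewrite -natz; nia.
- apply: (vge_sum hL hw) => i _.
  have [yL yg] := hy.1 i; have Aik := (hA i).1.
  split; first by apply: LM => //; apply: hkL; apply: kB.
  have hK : (Mf i <= K0)%N by rewrite /K0; apply: leq_trans (leq_addl _ _); exact: (@leq_bigmax _ Mf i).
  have := wgeM (hkL (kB (Sk K0 i) Aik)) yL (wk (kB (Sk K0 i) Aik) (hMf i K0 hK)) yg.
  move=> h; apply: vge_le h; have : (1 <= E)%N by []; rewrite -natz; nia.
Qed.

Lemma span_L x : x \in L -> exists A : 'I_N -> K, (forall i, A i \in k) /\ x = \sum_i A i * y i.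
Proof.
move=> xL; set s := `|w x|%N.
have hps : pi0 ^+ s != 0 by rewrite expf_neq0.
have : OL (pi0 ^+ s * x).
  split; first by apply: LM => //; apply: sfX => //; exact: pi0L.
  have [->|nz] := eqVneq x 0; first by rewrite mulr0; left.
  have pL : pi0 ^+ s \in L by apply: sfX => //; exact: pi0L.
  right; rewrite (vM hw pL xL hps nz) (vX hL hw s pi0L pi0nz) wpi0.
  have := lez_abs (w x); rewrite /s -natz; have : (1 <= E)%N by []; nia.
move/span_OL => [A [Ak eA]].
exists (fun i => A i / pi0 ^+ s); split; first by move=> i; apply: sfdiv => //; apply: sfX.
have -> : x = (pi0 ^+ s)^-1 * (pi0 ^+ s * x) by rewrite mulKf.
by rewrite eA mulr_sumr; apply: eq_bigr => i _; ring.
Qed.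
End Span.

Lemma sum_delta (n : nat) (f : 'I_n -> K) (i : 'I_n) : f i = \sum_(l < n) (i == l)%:R * f l.
Proof.
rewrite (bigD1 i) //= eqxx mul1r big1 ?addr0 // => l /negPf.
by rewrite eq_sym => ->; rewrite mul0r.
Qed.

Lemma dim_eq N (y : 'I_N -> K) : Ind y ->
  (forall x, x \in L -> exists A : 'I_N -> K, (forall i, A i \in k) /\ x = \sum_i A i * y i) -> N = m.
Proof.
move=> hy sp.
have yL : forall j, y j \in L by move=> j; case: (hy.1 j).
have exC : forall j, exists c : 'I_m -> K, (forall i, c i \in k) /\ y j = \sum_(i < m) c i * b i.
  by move=> j; have [c [[hc1 hc2] _]] := b2 (yL j); exists c.
have [C hC] := choice exC.
have [D hD] := choice (fun i => sp (b i) (b1 i)).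
pose Cm := \matrix_(j < N, i < m) C j i.
pose Dm := \matrix_(i < m, j < N) D i j.
have DC : Dm *m Cm = 1%:M.
  apply/matrixP => i l; rewrite !mxE.
  have [c [_ uniq]] := b2 (b1 i).
  have e1 := uniq (fun l => \sum_j D i j * C j l).
  have e2 := uniq (fun l => (i == l)%:R).
  have : (fun l => \sum_j D i j * C j l) = (fun l => (i == l)%:R :> K).
    rewrite -e1 ?e2 //.
      split; first by move=> l'; exact: sfn.
      exact: sum_delta.
    split.
      move=> l'; apply: (sfsum hk) => j _; apply: kM; [case: (hD i) => + _; apply | case: (hC j) => + _; apply].
    rewrite {1}(hD i).2 (eq_bigr (fun j => D i j * \sum_(l < m) C j l * b l)); last by move=> j _; rewrite {1}(hC j).2.
    rewrite (eq_bigr (fun j => \sum_(l < m) D i j * C j l * b l)); last by move=> j _; rewrite mulr_sumr; apply: eq_bigr => l' _; ring.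
    rewrite exchange_big /=; apply: eq_bigr => l' _; by rewrite mulr_suml.
  move/(congr1 (fun f => f l)) => /= <-; by apply: eq_bigr => j _; rewrite !mxE.
have CD : Cm *m Dm = 1%:M.
  apply/matrixP => j l; rewrite !mxE.
  pose c := fun l => \sum_i C j i * D i l - (j == l)%:R.
  have := ind_free hy (c := c).
  have ck : forall l, c l \in k.
    move=> l'; apply: kB; last exact: sfn.
    apply: (sfsum hk) => i _; apply: kM; [case: (hC j) => + _; apply | case: (hD i) => + _; apply].
  move=> /(_ ck) H.
  have : c l = 0.
    apply: H; rewrite /c.
    rewrite (eq_bigr (fun l => (\sum_i C j i * D i l) * y l - (j == l)%:R * y l)); last by move=> l' _; ring.
    rewrite sumrB -sum_delta; apply/eqP; rewrite subr_eq0; apply/eqP.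
    rewrite [in RHS](hC j).2 (eq_bigr (fun l => \sum_i C j i * D i l * y l)); last by move=> l' _; rewrite mulr_suml.
    rewrite exchange_big /=; apply: eq_bigr => i _.
    by rewrite [b i](hD i).2 mulr_sumr; apply: eq_bigr => l' _; ring.
  move/eqP; rewrite subr_eq0 => /eqP <-; by apply: eq_bigr => i _; rewrite !mxE.
apply/eqP; rewrite eqn_leq; apply/andP; split.
  rewrite -{1}(mxrank1 K N) -CD; apply: leq_trans (mxrankM_maxr _ _) _; exact: rank_leq_row.
rewrite -{1}(mxrank1 K m) -DC; apply: leq_trans (mxrankM_maxr _ _) _; exact: rank_leq_row.
Qed.

Theorem FI_main : (Q ^ E = q ^ m)%N.
Proof.
have [N [y [hy hmax]]] := exists_max.
have cov := max_cover hy hmax.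
have Nm := dim_eq hy (span_L hy cov).
rewrite -Nm; apply/eqP; rewrite eqn_leq (Ind_bound hy) andbT.
have := @card_le {ffun 'I_E -> 'I_Q} {ffun 'I_N -> 'I_q} sigma (tau y).
rewrite !card_ffun !card_ord; apply.
- exact: OLsigma.
- by move=> a; apply: OLtau; case: hy.
- by move=> d; apply: cov; apply: OLsigma.
- by move=> d d'; apply: sigma_inj.
Qed.

End FI.

From mathcomp Require Import all_boot all_order all_algebra.
From mathcomp Require Import boolp.
From mathcomp Require Import zify ring.
Import Order.TTheory GRing.Theory Num.Theory.
Set Implicit Arguments. Unset Strict Implicit. Unset Printing Implicit Defensive.
Local Open Scope ring_scope.

Lemma rc_gt1 (K : fieldType) (F : {pred K}) (v : K -> int) (q : nat) :
  is_subfield F -> is_normalized_dval F v -> residue_card F v q -> (1 < q)%N.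
Proof.
move=> hF hv [r [r1 r2 r3]].
have [i0 h0] := r3 0 (sf0 hF) (vge0 _ 0).
have h1' : vge v 0 1 by right; rewrite (v1 hF hv).
have [i1 h1] := r3 1 (sf1 hF) h1'.
rewrite ltnNge; apply/negP => hq.
have e : i0 = i1 by apply: ord_inj; have := ltn_ord i0; have := ltn_ord i1; lia.
have rkk := (r1 i1).1.
have : vge v 1 ((1 - r i1) - (0 - r i1)) by apply: (vgeB hF hv); rewrite ?sfB ?sf1 ?sf0 // -e.
have -> : (1 - r i1) - (0 - r i1) = 1 by ring.
case => [/eqP|]; first by rewrite oner_eq0.
by rewrite (v1 hF hv).
Qed.

Section Tower.
Variables (K : fieldType) (Kn : nat -> {pred K}) (v : nat -> K -> int) (q m : nat -> nat).
Hypothesis ht : local_tower Kn v q m.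

Lemma t_sf n : is_subfield (Kn n). Proof. by case: ht => _ _ H _ _; case: (H n). Qed.
Lemma t_sub n : {subset Kn n <= Kn n.+1}. Proof. by case: ht => _ _ H _ _; case: (H n). Qed.
Lemma t_dv n : is_normalized_dval (Kn n) (v n). Proof. by case: ht => _ _ _ H _; case: (H n). Qed.
Lemma t_rc n : residue_card (Kn n) (v n) (q n). Proof. by case: ht => _ _ _ H _; case: (H n). Qed.
Lemma t_dim n : dim_over (Kn 0) (Kn n) (m n). Proof. by case: ht => _ _ _ _ [H _ _]. Qed.
Lemma t_union x : exists n, x \in Kn n. Proof. by case: ht => _ _ _ _ [_ _ H]. Qed.
Lemma t_cpl : complete_wrt (Kn 0) (v 0). Proof. by case: ht. Qed.

Lemma t_comp_nat n : exists e : nat, (0 < e)%N /\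
  forall x, x \in Kn n -> x != 0 -> v n.+1 x = e%:Z * v n x.
Proof.
case: ht => _ _ _ _ [_ H _]; have [e e0 he] := H n.
exists `|e|%N; split; first by lia.
by move=> x xK nz; rewrite he // gez0_abs // ltW.
Qed.

Definition ef : nat -> nat := projT1 (choice t_comp_nat).
Lemma efP n : (0 < ef n)%N /\ forall x, x \in Kn n -> x != 0 -> v n.+1 x = (ef n)%:Z * v n x.
Proof. exact: (projT2 (choice t_comp_nat) n). Qed.

Definition En n := (\prod_(i < n) ef i)%N.
Lemma En_S n : En n.+1 = (En n * ef n)%N. Proof. by rewrite /En big_ord_recr. Qed.
Lemma En_gt0 n : (0 < En n)%N.
Proof. elim: n => [|n IH]; first by rewrite /En big_ord0. by rewrite En_S muln_gt0 IH (efP n).1. Qed.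

Lemma sub_le a b : (a <= b)%N -> {subset Kn a <= Kn b}.
Proof.
move=> /subnK <-; elim: (b - a)%N => [|d IH] x hx; first by rewrite add0n.
by rewrite addSn; apply: t_sub; apply: IH.
Qed.

Lemma vE n x : x \in Kn 0 -> x != 0 -> v n x = (En n)%:Z * v 0 x.
Proof.
move=> x0 nz; elim: n => [|n IH]; first by rewrite /En big_ord0 mul1r.
rewrite (efP n).2 //; last by apply: (sub_le (leq0n n)).
by rewrite IH En_S PoszM; ring.
Qed.

Lemma m_gt0 n : (0 < m n)%N.
Proof.
have [b [hb hu]] := t_dim n.
have [c [[_ e1] _]] := hu 1 (sf1 (t_sf n)).
rewrite lt0n; apply/eqP => em.
move: e1; rewrite big1 => [|i _]; first by move/eqP; rewrite oner_eq0.
by have := ltn_ord i; rewrite {2}em.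
Qed.

Lemma q_gt1 n : (1 < q n)%N.
Proof. exact: (rc_gt1 (t_sf n) (t_dv n) (t_rc n)). Qed.

Lemma FI n : (q n ^ En n = q 0 ^ m n)%N.
Proof.
have [pi0 [pi0k pi0nz v0pi0]] := vsurj (t_dv 0) 1.
have [pi [piL pinz wpi]] := vsurj (t_dv n) 1.
have [rk [rk1 rk2 rk3]] := t_rc 0.
have [rL [rL1 rL2 rL3]] := t_rc n.
have [b [b1 b2]] := t_dim n.
apply: (FI_main (t_sf 0) (t_sf n) (t_dv 0) (t_dv n) (sub_le (leq0n n)) (En_gt0 n) _ t_cpl
   pi0k pi0nz v0pi0 piL pinz wpi rk1 rk2 rk3 rL1 rL2 rL3 b1 b2).
by move=> x xk nz; apply: vE.
Qed.

End Tower.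

From mathcomp Require Import all_boot all_order all_algebra.
From mathcomp Require Import complex.
From mathcomp Require Import boolp reals.
From mathcomp Require Import sequences exp.
From mathcomp Require Import zify ring lra.
Import Order.TTheory GRing.Theory Num.Theory.
Set Implicit Arguments. Unset Strict Implicit. Unset Printing Implicit Defensive.
Local Open Scope ring_scope.

Section Real.
Variables (R : realType) (K : fieldType) (Kn : nat -> {pred K}) (v : nat -> K -> int) (q m : nat -> nat).
Hypothesis ht : local_tower Kn v q m.

Definition lq : R := ln ((q 0)%:R).
Lemma lq_gt0 : 0 < lq.
Proof. by apply: ln_gt0; rewrite ltr1n; exact: (q_gt1 ht). Qed.

Definition nrm n (x : K) : R :=
  if x == 0 then 0 else expR (- ((v n x)%:~R / (En ht n)%:R) * lq).

Lemma En_neq0 n : (En ht n)%:R != 0 :> R.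
Proof. by rewrite pnatr_eq0 -lt0n (En_gt0 ht). Qed.

Lemma nrm_step n x : x \in Kn n -> nrm n.+1 x = nrm n x.
Proof.
move=> xK; rewrite /nrm; case: eqP => // /eqP nz.
rewrite (efP ht n).2 // En_S natrM intrM.
have e0 : (ef ht n)%:R != 0 :> R by rewrite pnatr_eq0 -lt0n (efP ht n).1.
have E0 := En_neq0 n.
congr expR; rewrite /=; field; by apply/andP.
Qed.

Lemma nrm_mono a b x : (a <= b)%N -> x \in Kn a -> nrm b x = nrm a x.
Proof.
move=> /subnK <- xK; elim: (b - a)%N => [|d IH]; first by rewrite add0n.
by rewrite addSn nrm_step // (sub_le ht (leq_addl d a)).
Qed.

Lemma powK n x : x \in Kn n -> absn R (v n) (q n) x `^ ((m n)%:R)^-1 = nrm n x.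
Proof.
move=> xK; rewrite /absn /nrm; case: eqP => [_|/eqP nz].
  by rewrite powR0 // invr_eq0 pnatr_eq0 -lt0n (m_gt0 ht).
have Q0 : (0 : R) < (q n)%:R by rewrite ltr0n; apply: ltn_trans (q_gt1 ht n).
have hF : (En ht n)%:R * ln ((q n)%:R : R) = (m n)%:R * lq.
  rewrite /lq !mulr_natl -!lnXn //; try by rewrite ltr0n; have := q_gt1 ht 0; lia.
  by rewrite -!natrX (FI ht n).
rewrite -powR_intmul; last exact: ltW.
rewrite -powRrM /powR gt_eqF //; congr expR.
have E0 := En_neq0 n.
have m0 : (m n)%:R != 0 :> R by rewrite pnatr_eq0 -lt0n (m_gt0 ht).
have -> : ln ((q n)%:R : R) = (m n)%:R * lq / (En ht n)%:R.
  by rewrite -hF mulrC mulKf.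
rewrite intrN; field; by apply/andP.
Qed.

Lemma normK_eq n x : x \in Kn n -> normK R Kn v q m x = nrm n x.
Proof.
move=> xK; rewrite /normK; case: pselect => [H|H]; last by exfalso; apply: H; exists n.
case: ex_minnP => n0 h0 hmin.
by rewrite powK // (nrm_mono (hmin n xK) h0).
Qed.

Lemma nrm_ge0 n x : 0 <= nrm n x.
Proof. by rewrite /nrm; case: eqP => // _; apply: ltW; apply: expR_gt0. Qed.

Lemma nrm0 n : nrm n 0 = 0. Proof. by rewrite /nrm eqxx. Qed.

Lemma nrm_le n x y : x \in Kn n -> y \in Kn n -> y != 0 -> vge (v n) (v n y) x -> nrm n x <= nrm n y.
Proof.
move=> xK yK nz [->|h]; first by rewrite nrm0 nrm_ge0.
rewrite /nrm (negPf nz); case: eqP => [_|/eqP nx]; first by apply: ltW; apply: expR_gt0.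
rewrite ler_expR ler_pM2r ?lq_gt0 // lerN2 ler_pM2r ?invr_gt0 ?ltr0n ?(En_gt0 ht) //.
by rewrite ler_int.
Qed.

Lemma nrmN n x : x \in Kn n -> nrm n (- x) = nrm n x.
Proof. by move=> xK; rewrite /nrm oppr_eq0 (vN (t_sf ht n) (t_dv ht n)). Qed.

Lemma nrm_ultra n x y : x \in Kn n -> y \in Kn n -> nrm n (x - y) <= Num.max (nrm n x) (nrm n y).
Proof.
move=> xK yK.
have hF := t_sf ht n; have hv := t_dv ht n.
have [->|nx] := eqVneq x 0; first by rewrite sub0r nrmN // le_max lexx orbT.
have [->|ny] := eqVneq y 0; first by rewrite subr0 le_max lexx.
have xyK : x - y \in Kn n by apply: sfB.
have [le|lt] := leP (v n x) (v n y).
  have : nrm n (x - y) <= nrm n x.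
    apply: nrm_le => //; apply: (vgeB hF hv) => //; first by right.
    by right.
  by move=> h; rewrite le_max h.
have : nrm n (x - y) <= nrm n y.
  apply: nrm_le => //; apply: (vgeB hF hv) => //; first by right; apply: ltW.
  by right.
by move=> h; rewrite le_max h orbT.
Qed.

Lemma nrm_le1 n x : x \in Kn n -> vge (v n) 0 x -> nrm n x <= 1.
Proof.
move=> xK [->|h]; first by rewrite nrm0.
rewrite /nrm; case: eqP => // _; rewrite expR_le1 mulNr oppr_le0; apply: mulr_ge0; last exact: (ltW lq_gt0).
by rewrite divr_ge0 ?ler0n // ler0z.
Qed.

Lemma nrm_eq n x y : x \in Kn n -> y \in Kn n -> x != 0 -> vge (v n) (v n x + 1) (y - x) -> nrm n y = nrm n x.
Proof.
move=> xK yK nx h.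
have hF := t_sf ht n; have hv := t_dv ht n.
have ny : y != 0.
  apply/negP => /eqP y0; move: h; rewrite y0 sub0r => -[/eqP|]; first by rewrite oppr_eq0 (negPf nx).
  rewrite (vN hF hv) //; lia.
by rewrite /nrm (negPf nx) (negPf ny) (vge_strict hF hv xK yK nx h).
Qed.

Notation nK := (normK R Kn v q m).

Lemma common x y : exists n, x \in Kn n /\ y \in Kn n.
Proof.
have [a ha] := t_union ht x; have [b hb] := t_union ht y.
exists (maxn a b); split; [apply: (sub_le ht (leq_maxl a b)) | apply: (sub_le ht (leq_maxr a b))] => //.
Qed.

Lemma nK_ultra x y : nK (x - y) <= Num.max (nK x) (nK y).
Proof.
have [n [xK yK]] := common x y.
rewrite (normK_eq xK) (normK_eq yK) (normK_eq (sfB (t_sf ht n) xK yK)).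
exact: nrm_ultra.
Qed.

Lemma nK0 : nK 0 = 0.
Proof. by rewrite (normK_eq (sf0 (t_sf ht 0))) nrm0. Qed.

Lemma nK_ge0 x : 0 <= nK x.
Proof. have [n xK] := t_union ht x; rewrite (normK_eq xK); exact: nrm_ge0. Qed.

Lemma nKN x : nK (- x) = nK x.
Proof.
have [n xK] := t_union ht x.
by rewrite (normK_eq xK) (normK_eq (sfN (t_sf ht n) xK)) nrmN.
Qed.

Lemma nK_ultraD x y : nK (x + y) <= Num.max (nK x) (nK y).
Proof. by have := nK_ultra x (- y); rewrite opprK nKN. Qed.

End Real.

From mathcomp Require Import all_boot all_order all_algebra.
From mathcomp Require Import complex.
From mathcomp Require Import boolp reals.
From mathcomp Require Import ring lra.
Import Order.TTheory GRing.Theory Num.Theory.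
Set Implicit Arguments. Unset Strict Implicit. Unset Printing Implicit Defensive.
Local Open Scope ring_scope.

Lemma eqrel_psd (C : numClosedFieldType) N (E : 'I_N -> 'I_N -> bool) (c : 'I_N -> C) :
  (forall i, E i i) -> (forall i j, E i j -> E j i) -> (forall i j l, E i j -> E j l -> E i l) ->
  0 <= \sum_i \sum_j c i * (c j)^* * (E i j)%:R.
Proof.
move=> Er Es Et.
pose n l := \sum_j (E l j)%:R : C.
have Eeq : forall l l' j, E l l' -> E l j = E l' j.
  by move=> l l' j h; apply/idP/idP => h2; [apply: Et (Es _ _ h) h2 | apply: Et h h2].
have nE : forall l l', E l l' -> n l = n l'.
  by move=> l l' h; apply: eq_bigr => j _; rewrite (Eeq _ _ _ h).
have n0 : forall l, 0 < n l.
  move=> l; rewrite /n (bigD1 l) //= Er; apply: (lt_le_trans ltr01); rewrite lerDl.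
  by apply: sumr_ge0 => j _; apply: ler0n.
have key : forall i j, \sum_l (n l)^-1 * ((E l i)%:R * (E l j)%:R) = (E i j)%:R :> C.
  move=> i j.
  rewrite (eq_bigr (fun l => (E i j)%:R * ((n i)^-1 * (E l i)%:R))); last first.
    move=> l _; case: (boolP (E l i)) => h; last by rewrite !mul0r !mulr0.
    by rewrite (nE _ _ h) (Eeq _ _ _ h); ring.
  rewrite -mulr_sumr -mulr_sumr.
  have -> : \sum_l (E l i)%:R = n i :> C by apply: eq_bigr => l _; rewrite (_ : E l i = E i l) //; apply/idP/idP; apply: Es.
  by rewrite mulVf ?mulr1 // gt_eqF.
have eR : forall l, (n l)^-1 * ((\sum_i (E l i)%:R * c i) * (\sum_j (E l j)%:R * c j)^*)
   = \sum_i \sum_j (c i * (c j)^*) * ((n l)^-1 * ((E l i)%:R * (E l j)%:R)).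
  move=> l; rewrite rmorph_sum mulr_suml mulr_sumr; apply: eq_bigr => i _.
  rewrite mulr_sumr mulr_sumr; apply: eq_bigr => j _.
  by rewrite rmorphM /= conjC_nat; ring.
have -> : \sum_i \sum_j c i * (c j)^* * (E i j)%:R =
   \sum_l (n l)^-1 * ((\sum_i (E l i)%:R * c i) * (\sum_j (E l j)%:R * c j)^*).
  symmetry; rewrite (eq_bigr _ (fun l _ => eR l)) exchange_big /=; apply: eq_bigr => i _.
  rewrite exchange_big /=; apply: eq_bigr => j _.
  by rewrite -mulr_sumr key.
apply: sumr_ge0 => l _; apply: mulr_ge0; first by rewrite invr_ge0 ltW.
exact: mul_conjC_ge0.
Qed.

Local Open Scope complex_scope.

Section PSD.
Variables (R : realType) (N : nat) (d : 'I_N -> 'I_N -> R) (c : 'I_N -> R[i]).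
Hypotheses (d_ge0 : forall i j, 0 <= d i j) (d_refl : forall i, d i i = 0)
  (d_sym : forall i j, d i j = d j i) (d_ultra : forall i j l, d i l <= Num.max (d i j) (d j l)).

Definition Qf (G : 'I_N -> 'I_N -> R[i]) := \sum_i \sum_j c i * (c j)^* * G i j.

Lemma QfL (G G1 G2 : 'I_N -> 'I_N -> R[i]) a :
  (forall i j, G i j = a * G1 i j + G2 i j) -> Qf G = a * Qf G1 + Qf G2.
Proof.
move=> h; rewrite /Qf mulr_sumr -big_split /=; apply: eq_bigr => i _.
rewrite mulr_sumr -big_split /=; apply: eq_bigr => j _; rewrite h; ring.
Qed.

Lemma psd_ind n : forall (r : R) (g : R -> R),
  (#|[pred p : 'I_N * 'I_N | (d p.1 p.2 < r)%R]| <= n)%N ->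
  (forall i j, d i j < r -> 0 <= g (d i j)) ->
  (forall i j i' j', d i j <= d i' j' -> d i' j' < r -> g (d i' j') <= g (d i j)) ->
  0 <= Qf (fun i j => (if d i j < r then g (d i j) else 0)%:C).
Proof.
elim: n => [|n IH] r g hc hpos hmon.
  have -> : Qf (fun i j => (if d i j < r then g (d i j) else 0)%:C) = 0.
    rewrite /Qf big1 // => i _; rewrite big1 // => j _.
    case: ifP => h; last by rewrite mulr0.
    move: hc; rewrite leqn0 => /eqP/card0_eq/(_ (i, j)); rewrite !inE /= h //.
  by [].
case: (pickP [pred p : 'I_N * 'I_N | d p.1 p.2 < r]) => [p0 hp0|hnone]; last first.
  rewrite /Qf big1 // => i _; rewrite big1 // => j _.
  by have := hnone (i, j); rewrite !inE /= => ->; rewrite mulr0.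
case: (@arg_maxP _ _ _ p0 [pred p : 'I_N * 'I_N | d p.1 p.2 < r] (fun p => d p.1 p.2) hp0) => pm.
rewrite inE /= => hpm hmax.
set r' := d pm.1 pm.2.
have hmax' : forall i j, d i j < r -> d i j <= r'.
  by move=> i j h; apply: (hmax (i, j)).
have r'0 : 0 <= r' by apply: d_ge0.
have decomp : forall i j, (if d i j < r then g (d i j) else 0)%:C =
   (g r')%:C * ((d i j <= r')%R)%:R + (if d i j < r' then g (d i j) - g r' else 0)%:C.
  move=> i j.
  have -> : (((d i j <= r')%R)%:R : R[i]) = (((d i j <= r')%R)%:R : R)%:C by rewrite rmorph_nat.
  rewrite -rmorphM -rmorphD; congr (_%:C).
  have [h1|h1] := ltP (d i j) r'.
    by rewrite (lt_trans h1 hpm) (ltW h1) /=; ring.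
  case: ifP => h2; last first.
    case: leP => h3 //; last by rewrite mulr0 addr0.
    by exfalso; move: h2; rewrite (le_lt_trans h3 hpm).
  have e : d i j = r' by apply/eqP; rewrite eq_le h1 hmax'.
  by rewrite e lexx /=; ring.
rewrite (QfL (G1 := fun i j => ((d i j <= r')%R)%:R)
             (G2 := fun i j => (if d i j < r' then g (d i j) - g r' else 0)%:C) decomp).
apply: addr_ge0; first apply: mulr_ge0.
- by rewrite ler0c; apply: hpos.
- apply: eqrel_psd.
  + by move=> i; rewrite d_refl.
  + by move=> i j; rewrite d_sym.
  + move=> i j l h1 h2; apply: le_trans (d_ultra i j l) _; by rewrite ge_max h1 h2.
- apply: (IH r' (fun s => g s - g r')).
  + rewrite -ltnS; apply: leq_trans hc; apply: proper_card; apply/properP; split.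
      by apply/subsetP => p; rewrite !inE => h; apply: lt_trans h hpm.
    by exists pm; rewrite !inE //= ltxx.
  + move=> i j h /=; rewrite subr_ge0; apply: hmon; [exact: ltW | exact: hpm].
  + move=> i j i' j' h1 h2 /=; rewrite lerD2r; apply: hmon => //; exact: lt_trans h2 hpm.
Qed.

Lemma psd_final (g : R -> R) :
  (forall s, 0 <= s -> 0 <= g s) -> (forall s s', 0 <= s -> s <= s' -> g s' <= g s) ->
  0 <= Qf (fun i j => (g (d i j))%:C).
Proof.
move=> gpos gmon.
set r := 1 + \sum_i \sum_j d i j.
have hlt : forall i j, d i j < r.
  move=> i j; rewrite /r; apply: (lt_le_trans (x := d i j) (y := 1 + d i j)); first by rewrite ltrDr ltr01.
  rewrite lerD2l (bigD1 i) //= (bigD1 j) //= -addrA lerDl.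
  apply: addr_ge0; first by apply: sumr_ge0 => k _; apply: d_ge0.
  by apply: sumr_ge0 => k _; apply: sumr_ge0 => l _; apply: d_ge0.
have := @psd_ind _ r g (leqnn _) (fun i j _ => gpos _ (d_ge0 i j))
   (fun i j i' j' h _ => gmon _ _ (d_ge0 i j) h).
congr (0 <= _); rewrite /Qf; apply: eq_bigr => i _; apply: eq_bigr => j _.
by rewrite hlt.
Qed.
End PSD.

Unset Implicit Arguments.
From mathcomp Require Import all_boot all_order all_algebra.
From mathcomp Require Import complex.
From mathcomp Require Import boolp reals.
From mathcomp Require Import sequences exp.
From mathcomp Require Import ring lra.
Import Order.TTheory GRing.Theory Num.Theory.
Local Open Scope ring_scope.
Local Open Scope complex_scope.

Lemma rho_ge0 (R : realType) (alpha s t : R) : 0 <= rho alpha s t.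
Proof. by rewrite /rho; case: ifP => _ //; apply: ltW; apply: expR_gt0. Qed.

Lemma rho_mon (R : realType) (alpha t s s' : R) : 0 < alpha -> 0 < t -> 0 <= s -> s <= s' ->
  rho alpha s' t <= rho alpha s t.
Proof.
move=> a0 t0 s0 ss; rewrite /rho.
case: ifP => h'; case: ifP => h //.
- rewrite ler_expR lerN2 ler_pM2l //; apply: (ge0_ler_powR (ltW a0)) => //; rewrite nnegrE //; exact: le_trans ss.
- rewrite expR_le1 oppr_le0; apply: mulr_ge0; [exact: ltW | exact: powR_ge0].
- by exfalso; move: h'; rewrite (lt_le_trans h ss).
Qed.

Theorem proposition8 (R : realType) (K : fieldType) (Kn : nat -> {pred K})
  (v : nat -> K -> int) (q m : nat -> nat) (alpha : R) :
  local_tower Kn v q m -> 0 < alpha ->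
  forall t : R, 0 < t ->
    let phi := fun xi : K => (rho alpha (normK R Kn v q m xi) t)%:C in
    continuous_ind Kn v phi /\ positive_definite phi.
Proof.
move=> ht a0 t t0 phi; split.
  move=> V _ n x xK hV.
  have [x0|nx] := eqVneq x 0.
    exists 0 => y yK hy; move: hV; rewrite /phi x0 (nK0 R ht).
    have hy1 : normK R Kn v q m y <= 1.
      rewrite (normK_eq R ht yK); apply: (nrm_le1 R ht yK).
      by move: hy; rewrite x0 subr0.
    rewrite /rho ltr10.
    by case: ifP => // h; exfalso; move: h; rewrite ltNge hy1.
  exists (v n x + 1) => y yK hy; move: hV; rewrite /phi.
  by rewrite (normK_eq R ht yK) (normK_eq R ht xK) (nrm_eq R ht xK yK nx hy).
move=> N xi c.
pose d := fun i j : 'I_N => normK R Kn v q m (xi i - xi j).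
have := @psd_final R N d c (fun i j => nK_ge0 R ht _)
   (fun i => ltac:(by rewrite /d subrr (nK0 R ht)))
   (fun i j => ltac:(by rewrite /d -opprB (nKN R ht)))
   (fun i j l => ltac:(by rewrite /d (_ : xi i - xi l = (xi i - xi j) + (xi j - xi l)); [apply: nK_ultraD | ring]))
   (fun s => rho alpha s t) (fun s _ => rho_ge0 R alpha s t)
   (fun s s' s0 ss => rho_mon R alpha t s s' a0 t0 s0 ss).
by [].
Qed.
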